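(* Let $G$ be a graph of order $n\ge 10$. If $G$ does not contain a trebly chorded cycle with three chords incident to a vertex, then $|E(G)|\le 4n-16$.
   Context: All graphs are finite and simple. A chord of a cycle $C$ is an edge joining two non-consecutive vertices of $C$. ''$G$ contains a trebly chorded cycle with three chords incident to a vertex'' means that $G$ has a cycle $C$ and three distinct edges of $G$, each a chord of $C$, all sharing a common endpoint. *)

(* Defs.v *)
From mathcomp Require Import all_boot.
Set Implicit Arguments. Unset Strict Implicit. Unset Printing Implicit Defensive.

Definition simple_graph (T : finType) (e : rel T) : Prop :=
  symmetric e /\ irreflexive e.

Definition edge_set (T : finType) (e : rel T) : {set {set T}} :=
  [set E : {set T} | [exists x, exists y, (E == [set x; y]) && e x y]].

Definition is_cycle (T : finType) (e : rel T) (c : seq T) : bool :=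
  [&& 3 <= size c, uniq c & cycle e c].

Definition is_chord (T : finType) (e : rel T) (c : seq T) (x y : T) : bool :=
  [&& e x y, x \in c, y \in c, y != next c x & x != next c y].

Definition has_trebly_chorded_cycle_at_vertex (T : finType) (e : rel T) : Prop :=
  exists (c : seq T) (v u1 u2 u3 : T),
    [/\ is_cycle e c, [&& u1 != u2, u1 != u3 & u2 != u3] &
        [&& is_chord e c v u1, is_chord e c v u2 & is_chord e c v u3]].

(* Main.v *)
Require Import Defs.
From mathcomp Require Import all_boot zify.
Set Implicit Arguments. Unset Strict Implicit. Unset Printing Implicit Defensive.

Section Comp.
Variables (h d : nat).

Definition Gu (b : seq (seq bool)) (i j : nat) : bool :=
  if i < j then nth false (nth [::] b i) (j - i.+1)
  else if j < i then nth false (nth [::] b j) (i - j.+1) else false.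

Definition degs (G : nat -> nat -> bool) : seq nat :=
  [seq count (G i) (iota 0 h) + (i < d) | i <- iota 0 h].

Definition okdeg (i dg prev : nat) : bool :=
  [&& 3 <= dg, dg <= d & [|| i == 0, i == d | dg <= prev]].

Definition condsl (ds : seq nat) : bool :=
  all (fun i => okdeg i (nth 0 ds i) (nth 0 ds i.-1)) (iota 0 h) && (4 * h + 6 <= d + sumn ds).

Definition valid (G : nat -> nat -> bool) (q : seq nat) : bool :=
  [&& uniq q, all (fun i => i < h) q, sorted G q & 5 <= count (fun i => i < d) q].

Fixpoint first_some (A B : Type) (f : A -> option B) (s : seq A) : option B :=
  match s with [::] => None | x :: s' => match f x with Some y => Some y | None => first_some f s' end end.

Fixpoint dfs (nb : nat -> seq nat) (fuel : nat) (cur : seq nat) (cnt : nat) (lst : nat) : option (seq nat) :=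
  if 5 <= cnt then Some cur else
  match fuel with 0 => None | f.+1 =>
    first_some (fun j => if j \in cur then None else dfs nb f (j :: cur) (if j < d then cnt.+1 else cnt) j) (nb lst) end.

Definition search (G : nat -> nat -> bool) : option (seq nat) :=
  let nbl := [seq [seq j <- iota 0 h | G i j] | i <- iota 0 h] in
  let nb i := nth [::] nbl i in
  first_some (fun i => dfs nb h [:: i] (if i < d then 1 else 0) i) (iota 0 h).

Definition leaf (b : seq (seq bool)) : bool :=
  if condsl (degs (Gu b)) then
    (match search (Gu b) with Some q => valid (Gu b) q | None => false end)
  else true.

Definition pdeg (pre : seq (seq bool)) (i : nat) : nat :=
  count (fun k => nth false (nth [::] pre k) (i - k.+1)) (iota 0 i).

Fixpoint rowchk (n : nat) (k : seq bool -> bool) (acc : seq bool) : bool :=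
  match n with 0 => k acc
  | n'.+1 => if rowchk n' k (true :: acc) then rowchk n' k (false :: acc) else false end.

Fixpoint chk (i fuel : nat) (pre : seq (seq bool)) (prev : nat) : bool :=
  match fuel with
  | 0 => leaf pre
  | f.+1 => rowchk (h - i.+1) (fun r =>
       let dg := pdeg pre i + count id r + (i < d) in
       if okdeg i dg prev then chk i.+1 f (rcons pre r) dg else true) [::]
  end.

Definition check : bool := chk 0 h [::] 0.

Lemma rowchk_sound n k acc : rowchk n k acc -> forall l, size l = n -> k (l ++ acc).
Proof.
elim: n acc => [|n IH] acc /=; first by move=> H [|//].
case E1: (rowchk n k (true :: acc)) => // E2 l.
case/lastP: l => [//|l x]; rewrite size_rcons => /eqP; rewrite eqSS => /eqP sl.
rewrite cat_rcons.
by case: x; [apply: IH E1 _ sl | apply: IH E2 _ sl].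
Qed.

Lemma nth_degs G i : i < h -> nth 0 (degs G) i = count (G i) (iota 0 h) + (i < d).
Proof. by move=> ih; rewrite (nth_map 0) ?size_iota // nth_iota. Qed.

Definition shaped (b : seq (seq bool)) :=
  size b = h /\ forall k, k < h -> size (nth [::] b k) = h - k.+1.

Lemma count_row (r : seq bool) : count id r = count (nth false r) (iota 0 (size r)).
Proof. by rewrite -{1}(mkseq_nth false r) /mkseq count_map. Qed.

Lemma pdeg_ok b i : shaped b -> i < h ->
  pdeg (take i b) i + count id (nth [::] b i) + (i < d) = nth 0 (degs (Gu b)) i.
Proof.
move=> [sb shb] ih; rewrite nth_degs //.
have -> : h = i + (1 + (h - i.+1)) by lia.
rewrite iotaD iotaD count_cat count_cat addnA.
rewrite -!addnA; congr (_ + _).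
- apply: eq_in_count => k; rewrite mem_iota add0n /= => ki.
  by rewrite /Gu ltnNge (ltnW ki) /= ki nth_take.
- rewrite add0n /= {1}/Gu ltnn add0n addn1; congr (_ + _).
  rewrite (_ : iota i.+1 (h - i.+1) = map (addn i.+1) (iota 0 (h - i.+1))); last by rewrite -iotaDl addn0.
  rewrite count_map count_row shb //.
  apply: eq_in_count => t _ /=.
  by rewrite /Gu (ltn_addr _ (ltnSn i)) addKn.
Qed.

Lemma chk_sound b : shaped b -> condsl (degs (Gu b)) ->
  forall f i pre prev, i + f = h -> pre = take i b ->
  (0 < i -> prev = nth 0 (degs (Gu b)) i.-1) -> chk i f pre prev -> leaf b.
Proof.
move=> shb cnd; elim => [|f IH] i pre prev.
  rewrite addn0 => -> -> _ /=; rewrite take_oversize //; by rewrite shb.1.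
move=> ihf epre hprev /=.
have ih : i < h by lia.
move/rowchk_sound => /(_ (nth [::] b i) (shb.2 i ih)); rewrite cats0 epre pdeg_ok //.
have okd : okdeg i (nth 0 (degs (Gu b)) i) prev.
  move: cnd => /andP [/allP /(_ i) H _].
  have := H; rewrite mem_iota add0n ih => /(_ isT).
  rewrite /okdeg => /and3P [A1 A2 H3]; rewrite A1 A2 /=.
  case: (posnP i) => [//|ip]; by move: H3; rewrite (hprev ip) eqn0Ngt ip.
rewrite okd => /IH; apply => //; first by lia.
by rewrite (take_nth [::]) // shb.1.
Qed.

Definition enc (G : nat -> nat -> bool) : seq (seq bool) :=
  mkseq (fun i => mkseq (fun t => G i (i.+1 + t)) (h - i.+1)) h.

Lemma enc_shaped G : shaped (enc G).
Proof. by split; [rewrite size_mkseq | move=> k kh; rewrite nth_mkseq // size_mkseq]. Qed.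

Lemma enc_ok G : (forall i j, G i j = G j i) -> (forall i, G i i = false) ->
  forall i j, i < h -> j < h -> Gu (enc G) i j = G i j.
Proof.
move=> Gs Gi i j ih jh; rewrite /Gu /enc; case: ltngtP => [ij|ji|->].
- by rewrite nth_mkseq // nth_mkseq ?subnKC //; lia.
- by rewrite nth_mkseq // nth_mkseq ?subnKC // ?Gs //; lia.
- by rewrite Gi.
Qed.

Lemma comp_sound G : check -> (forall i j, G i j = G j i) -> (forall i, G i i = false) ->
  condsl (degs G) -> exists q, valid G q.
Proof.
move=> chkH Gs Gi cnd.
have sh := enc_shaped G.
have eqG : forall i j, i < h -> j < h -> Gu (enc G) i j = G i j by apply: enc_ok.
have ed : degs (Gu (enc G)) = degs G.
  apply/eq_in_map => i; rewrite mem_iota add0n => ih; congr (_ + _).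
  by apply: eq_in_count => j; rewrite mem_iota add0n => jh; rewrite /= eqG.
have cnd' : condsl (degs (Gu (enc G))) by rewrite ed.
have := chk_sound sh cnd' (add0n h) (esym (take0 _)) (fun H => False_ind _ (notF H)) chkH.
rewrite /leaf ed cnd; case: search => [q|] // /and4P [uq aq sq cq].
exists q; apply/and4P; split => //.
case: q aq sq {uq cq} => [|x q] //= aq sq.
rewrite -(eq_in_path (P := fun i => i < h) (e := Gu (enc G))) //.
Qed.

End Comp.

Lemma check_all h d : 5 <= d -> d <= h -> h <= 7 -> check h d.
Proof.
move=> d5 dh h7.
have hE : h = 5 \/ h = 6 \/ h = 7 by lia.
have dE : d = 5 \/ d = 6 \/ d = 7 by lia.
case: hE dh => [->|[->|->]]; case: dE => [->|[->|->]] dh; try (exfalso; move: dh; apply/negP; by []); vm_compute; reflexivity.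
Qed.


Section Graph.
Variables (T : finType) (e : rel T).
Hypotheses (esym : symmetric e) (eirr : irreflexive e).

Definition nb (A : {set T}) x := [set y in A | e x y].
Definition deg (A : {set T}) x := #|nb A x|.
Definition EA (A : {set T}) : {set {set T}} :=
  [set E : {set T} | [exists x in A, exists y in A, (E == [set x; y]) && e x y]].

Lemma EA_T : EA setT = edge_set e.
Proof.
apply/setP => E; rewrite !inE.
apply/existsP/existsP => [[x /andP [_ /existsP [y /andP [_ H]]]]|[x /existsP [y H]]].
  by exists x; apply/existsP; exists y.
by exists x; rewrite in_setT /=; apply/existsP; exists y; rewrite in_setT.
Qed.

Lemma set2_inj (x y z : T) : x != y -> x != z -> [set x; y] = [set x; z] -> y = z.
Proof.
move=> xy xz E.
have : y \in [set x; z] by rewrite -E !inE eqxx orbT.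
rewrite !inE => /orP [/eqP yx|/eqP //].
by rewrite yx eqxx in xy.
Qed.

Lemma EA_del (A : {set T}) (x : T) : x \in A -> #|EA A| = #|EA (A :\ x)| + deg A x.
Proof.
move=> xA.
pose F := [set [set x; y] | y in nb A x].
have cF : #|F| = deg A x.
  rewrite card_in_imset // => y z; rewrite !inE => /andP [_ xy] /andP [_ xz].
  apply: set2_inj; apply/eqP => E; [by rewrite E eirr in xy | by rewrite E eirr in xz].
have eq : EA A = EA (A :\ x) :|: F.
  apply/setP => E; rewrite !inE; apply/idP/idP.
  - case/exists_inP => a aA /exists_inP [b bA /andP [/eqP -> eab]].
    case: (eqVneq a x) => [ax|ax].
      apply/orP; right; apply/imsetP; exists b; first by rewrite inE bA -ax.
      by rewrite ax.
    case: (eqVneq b x) => [bx|bx].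
      apply/orP; right; apply/imsetP; exists a; first by rewrite inE aA -bx esym.
      by rewrite bx setUC.
    apply/orP; left; apply/exists_inP; exists a; first by rewrite !inE ax.
    by apply/exists_inP; exists b; rewrite ?inE ?bx ?eqxx.
  - case/orP.
    + case/exists_inP => a; rewrite !inE => /andP [_ aA] /exists_inP [b]; rewrite !inE => /andP [_ bA] H.
      by apply/exists_inP; exists a => //; apply/exists_inP; exists b.
    + case/imsetP => y; rewrite inE => /andP [yA xy] ->.
      by apply/exists_inP; exists x => //; apply/exists_inP; exists y => //; rewrite eqxx.
rewrite eq cardsU cF.
have -> : EA (A :\ x) :&: F = set0.
  apply/setP => E; rewrite !inE; apply/negbTE/negP.
  move=> /andP [/exists_inP [a aA /exists_inP [b bA /andP [/eqP EE _]]] /imsetP [y _ Ey]].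
  have : x \in E by rewrite Ey !inE eqxx.
  rewrite EE !inE => /orP [/eqP xa|/eqP xb].
    by move: aA; rewrite !inE xa eqxx.
  by move: bA; rewrite !inE xb eqxx.
by rewrite cards0 subn0.
Qed.

Lemma EA0 : #|EA set0| = 0.
Proof.
apply/eqP; rewrite cards_eq0; apply/eqP/setP => E; rewrite !inE.
by apply/negbTE/negP => /exists_inP [a]; rewrite inE.
Qed.

Lemma deg_del (A : {set T}) (x y : T) : x \in A -> y \in A :\ x ->
  deg A y = deg (A :\ x) y + e y x.
Proof.
move=> xA yA; rewrite /deg (cardsD1 x (nb A y)) addnC; congr (_ + _).
  by apply: eq_card => z; rewrite !inE; case: (z == x).
by rewrite !inE xA.
Qed.

Lemma sum_bool (B : {set T}) (P : pred T) :
  \sum_(y in B) (P y : nat) = #|[set y in B | P y]|.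
Proof.
rewrite (eq_bigr (fun y => if P y then 1 else 0)) // -big_mkcondr sum1dep_card.
by apply: eq_card => z; rewrite !inE.
Qed.

Lemma handshake (A : {set T}) : \sum_(y in A) deg A y = 2 * #|EA A|.
Proof.
have [n] := ubnP #|A|; elim: n A => // n IH A.
case: (set_0Vmem A) => [->|[x xA]] ltA.
  by rewrite big_set0 EA0.
rewrite (bigD1 x) //=.
rewrite (eq_bigl (fun y => y \in A :\ x)); last by move=> y; rewrite !inE andbC.
rewrite (eq_bigr (fun y => deg (A :\ x) y + e y x)); last by move=> y yA; rewrite (deg_del xA yA).
rewrite big_split /= IH; last by move: ltA; rewrite (cardsD1 x A) xA.
rewrite sum_bool (EA_del xA).
have -> : #|[set y in A :\ x | e y x]| = deg A x.
  apply: eq_card => z; rewrite !inE esym.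
  by case: (eqVneq z x) => [->|]; rewrite ?eirr ?andbF.
lia.
Qed.

Definition cfg := has_trebly_chorded_cycle_at_vertex e.

Lemma trim (P : pred T) n : forall p : seq T, size p <= n -> uniq p -> sorted e p ->
  5 <= count P p ->
  exists a r, [/\ uniq (a :: r), sorted e (a :: r), {subset a :: r <= p},
                  5 <= count P (a :: r) & P a && P (last a r)].
Proof.
elim: n => [|n IH] [|a r] //= szp uq sq cP.
case Pa: (P a); last first.
  case/andP: uq => _ ur.
  have cr : 5 <= count P r by rewrite Pa in cP.
  have [a' [r' [H1 H2 H3 H4 H5]]] := IH r szp ur (path_sorted sq) cr.
  by exists a', r'; split => // y /H3 yr; rewrite inE yr orbT.
case Pl: (P (last a r)); first by exists a, r; split => //; rewrite Pa Pl.
have sz : size (belast a r) <= n by rewrite size_belast.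
have uq' : uniq (a :: r) := uq.
have sq' : sorted e (a :: r) := sq.
have cP' : 5 <= count P (a :: r) := cP.
move: uq' sq' cP'; rewrite lastI rcons_uniq -cats1 => /andP [_ ub] /cat_sorted2 [sb _].
rewrite count_cat /= Pl !addn0 => cb.
have [a' [r' [H1 H2 H3 H4 H5]]] := IH _ sz ub sb cb.
by exists a', r'; split => // y /H3 yb; rewrite mem_cat yb.
Qed.

Lemma count_split (P Q : pred T) (s : seq T) :
  count P s <= count (fun y => P y && Q y) s + count (predC Q) s.
Proof.
elim: s => //= x s IH; case: (P x); case: (Q x) => /=; lia.
Qed.

Lemma last_nonnil (x y : T) s : s != [::] -> last x s = last y s.
Proof. by case: s. Qed.

Lemma core v a r : v \notin a :: r -> uniq (a :: r) -> sorted e (a :: r) ->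
  e v a -> e v (last a r) -> 3 <= count (fun y => e v y && (y != last a r)) r -> cfg.
Proof.
move=> vq uq sq va vl cnt.
set l := last a r.
set f := [seq y <- r | e v y && (y != l)].
have sf : 2 < size f by rewrite size_filter.
have ar : a \notin r by case/andP: uq.
have ur : uniq r by case/andP: uq.
have vr : v \notin r by move: vq; rewrite inE negb_or => /andP [].
have va' : v != a by move: vq; rewrite inE negb_or => /andP [].
have uf : uniq f by rewrite filter_uniq.
have mf i : i < size f -> [/\ nth v f i \in r, e v (nth v f i) & nth v f i != l].
  move=> ilt; have := mem_nth v ilt; rewrite mem_filter => /andP [/andP [-> ->] ->]; done.
set c := v :: a :: r.
have chord i : i < size f -> is_chord e c v (nth v f i).
  move=> ilt; case: (mf i ilt).
  set u := nth v f i => ur' evu ul.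
  have uv : u != v by apply/eqP => uv; rewrite -uv ur' in vr.
  have ua : u != a by apply/eqP => ua; rewrite -ua ur' in ar.
  rewrite /is_chord evu /c !inE eqxx ur' !orbT /=.
  rewrite eqxx ua /=.
  rewrite (ifN_eq _ _ uv).
  have E : next (v :: a :: r) u = next_at u v a r by rewrite /= (ifN_eq _ _ uv).
  rewrite -E next_nth !inE ur' !orbT /=.
  have vu : v != u by rewrite eq_sym.
  have au : a != u by rewrite eq_sym.
  rewrite (ifN_eq _ _ vu) (ifN_eq _ _ au) /=.
  case: (ltnP (index u r).+1 (size r)) => [lt|ge].
    apply/eqP => vn; have := mem_nth v lt; rewrite -vn => H; by rewrite H in vr.
  have iu : index u r = (size r).-1.
    have := index_mem u r; rewrite ur'; move: ge; case: (size r) => // k; rewrite ltnS /= => H1 H2.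
    by apply/eqP; rewrite eqn_leq H1 andbT -ltnS H2.
  have : nth v r (index u r) = u by rewrite nth_index.
  rewrite iu nth_last => H.
  exfalso; move/eqP: ul; apply.
  rewrite -H /l; apply: last_nonnil; by case: (r) ur'.
have s0 : 0 < size f by apply: leq_trans sf.
have s1 : 1 < size f by apply: leq_trans sf.
have szr : 0 < size r.
  by apply: leq_trans s0 _; rewrite size_filter count_size.
exists c, v, (nth v f 0), (nth v f 1), (nth v f 2); split.
- rewrite /is_cycle /c /= ltnS ltnS szr vq /=.
  move: uq => /= ->; rewrite rcons_path /= va.
  by move: sq => /= ->; rewrite esym.
- by rewrite !nth_uniq.
- by rewrite !chord.
Qed.


Lemma cfg_path v p : v \notin p -> uniq p -> sorted e p -> 5 <= count (e v) p -> cfg.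
Proof.
move=> vp up sp cp.
have [a [r [uq sq sub cq /andP [va vl]]]] := trim (leqnn (size p)) up sp cp.
apply: (@core v a r) => //.
  by apply/negP => /sub; apply/negP.
have c4 : 4 <= count (e v) r by move: cq; rewrite /= va.
have cl : count (predC (fun y => y != last a r)) r <= 1.
  rewrite (eq_count (a2 := pred1 (last a r))); last by move=> y; rewrite /= negbK.
  by rewrite count_uniq_mem ?leq_b1 //; case/andP: uq.
have H := count_split (e v) (fun y => y != last a r) r.
have H2 := leq_trans c4 H.
have H3 := leq_trans H2 (leq_add (leqnn _) cl).
by rewrite addn1 ltnS in H3.
Qed.

Lemma longpath (A : {set T}) : (forall x, x \in A -> 5 <= deg A x) ->
  forall p, p != [::] -> uniq p -> sorted e p -> all (fun y => y \in A) p -> cfg.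
Proof.
move=> dA p; have [n] := ubnP (#|A| - size p); elim: n p => // n IH [//|x r] ltn _ up sp ap.
have szA : forall q, uniq q -> all (fun y => y \in A) q -> size q <= #|A|.
  move=> q uq aq; rewrite -(card_uniqP uq); apply: subset_leq_card.
  by apply/subsetP => z zq; move/allP: aq => /(_ z zq).
case: (boolP [exists y in A, e x y && (y \notin x :: r)]).
  case/exists_inP => y yA /andP [exy yn].
  have uq : uniq (y :: x :: r) by rewrite /= yn.
  have aq : all (fun y => y \in A) (y :: x :: r) by rewrite /= yA.
  have := szA _ uq aq => sz.
  apply: (IH (y :: x :: r)) => //.
  - move: ltn sz; rewrite /=; lia.
  - by rewrite /= esym exy.
move/exists_inP => nex.
have sub : forall y, y \in nb A x -> y \in r.
  move=> y; rewrite inE => /andP [yA exy].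
  case: (boolP (y \in x :: r)) => [|yn]; last by exfalso; apply: nex; exists y => //; rewrite exy.
  rewrite inE => /orP [/eqP yx|//]; by rewrite yx eirr in exy.
case/andP: up => xr ur.
apply: (@cfg_path x r) => //; first exact: path_sorted sp.
apply: leq_trans (dA x _) _; first by move: ap => /= /andP [].
rewrite -size_filter -(card_uniqP (filter_uniq _ ur)) /deg.
apply: subset_leq_card; apply/subsetP => y yn.
have yr := sub y yn; rewrite mem_filter yr andbT.
by move: yn; rewrite inE => /andP [].
Qed.

Lemma small (A : {set T}) (v : T) : v \in A -> #|A| <= 8 ->
  (forall x, x \in A -> 3 <= deg A x <= deg A v) -> 5 <= deg A v ->
  4 * #|A| + 2 <= \sum_(x in A) deg A x -> cfg.
Proof.
move=> vA A8 degA d5 sumA.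
set d := deg A v.
set N := nb A v.
set M := [set y in A :\ v | ~~ e v y].
pose R := fun x y => deg A y <= deg A x.
have tR : total R by move=> x y; rewrite /R leq_total.
set s1 := sort R (enum N).
set s2 := sort R (enum M).
set s := s1 ++ s2.
have ss1 : size s1 = d by rewrite size_sort -cardE.
have ms1 y : (y \in s1) = (y \in N) by rewrite mem_sort mem_enum.
have ms2 y : (y \in s2) = (y \in M) by rewrite mem_sort mem_enum.
have us : uniq s.
  rewrite cat_uniq !sort_uniq !enum_uniq /= andbT.
  apply/hasPn => y; rewrite ms2 ms1 !inE => /andP [_ nv].
  by rewrite (negbTE nv) andbF.
have msA y : (y \in s) = (y \in A :\ v).
  rewrite mem_cat ms1 ms2 !inE.
  case: (eqVneq y v) => [->|yv]; first by rewrite eirr /= andbF.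
  by case: (e v y); rewrite /= ?andbT ?andbF ?orbF.
set h := #|A :\ v|.
have sz : size s = h by rewrite -(card_uniqP us); apply: eq_card.
have hA : #|A| = h.+1 by rewrite /h (cardsD1 v A) vA.
have dh : d <= h.
  apply: subset_leq_card; apply/subsetP => y; rewrite !inE => /andP [yA evy].
  rewrite yA andbT; apply/eqP => yv; by rewrite yv eirr in evy.
have ss2 : size s2 = h - d by rewrite -sz size_cat ss1 addKn.
have F5 i : i < h -> e v (nth v s i) = (i < d).
  move=> ih; rewrite nth_cat ss1; case: ltnP => id.
    have : nth v s1 i \in s1 by rewrite mem_nth // ss1.
    by rewrite ms1 inE => /andP [].
  have : nth v s2 (i - d) \in s2 by rewrite mem_nth // ss2; lia.
  by rewrite ms2 inE => /andP [_ ]; move/negbTE.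
have F6 i : i.+1 < h -> i.+1 != d -> deg A (nth v s i.+1) <= deg A (nth v s i).
  move=> ih id; rewrite !nth_cat ss1.
  case: (ltnP i.+1 d) => lt.
    rewrite (ltnW lt).
    have := sort_sorted tR (enum N); move/sortedP => /(_ v i); apply.
    by rewrite -/s1 ss1.
  have le : d <= i by move: lt id; rewrite leq_eqVlt eq_sym => /orP [->//|].
  rewrite ltnNge le /= subSn //.
  have := sort_sorted tR (enum M); move/sortedP => /(_ v (i - d)); apply.
  rewrite -/s2 ss2; lia.
pose G i j := e (nth v s i) (nth v s j).
have Gs i j : G i j = G j i by rewrite /G esym.
have Gi i : G i i = false by rewrite /G eirr.
have sA i : i < h -> nth v s i \in A :\ v by move=> ih; rewrite -msA mem_nth // sz.
have Dok i : i < h -> count (G i) (iota 0 h) + (i < d) = deg A (nth v s i).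
  move=> ih; set x := nth v s i.
  have xA : x \in A :\ v by apply: sA.
  rewrite /deg (cardsD1 v (nb A x)) addnC; congr (_ + _); first by rewrite !inE vA esym F5.
  have -> : count (G i) (iota 0 h) = count (e x) s by rewrite -[in RHS](mkseq_nth v s) sz /mkseq count_map.
  rewrite -size_filter -(card_uniqP (filter_uniq _ us)); apply: eq_card => y.
  rewrite mem_filter msA !inE.
  by case: (e x y); rewrite /= ?andbT ?andbF.
have cnd : condsl h d (degs h d G).
  apply/andP; split.
    apply/allP => i; rewrite mem_iota add0n => ih.
    rewrite nth_degs // Dok //.
    have xA : nth v s i \in A by move: (sA i ih); rewrite inE => /andP [].
    case/andP: (degA _ xA) => d3 dd.
    rewrite /okdeg d3 dd /=.
    case: (posnP i) => [->//|ip].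
    case: (eqVneq i d) => [->|ind]; first by rewrite ?eqxx ?orTb ?orbT.
    have ih' : i.-1 < h by lia.
    rewrite nth_degs // Dok //.
    have := F6 i.-1; rewrite prednK // => /(_ ih ind) ->; by rewrite !orbT.
  have -> : sumn (degs h d G) = \sum_(x in A :\ v) deg A x.
    rewrite /degs (_ : map _ _ = map (fun i => deg A (nth v s i)) (iota 0 h)); last first.
      by apply/eq_in_map => i; rewrite mem_iota add0n => ih; apply: Dok.
    have -> : map (fun i => deg A (nth v s i)) (iota 0 h) = map (deg A) s.
      by rewrite -[in RHS](mkseq_nth v s) sz /mkseq -map_comp.
    rewrite sumnE big_map -big_enum; apply: perm_big; apply: uniq_perm => //.
      exact: enum_uniq.
    by move=> y; rewrite mem_enum msA.
  move: sumA; rewrite (bigD1 v) //=.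
  rewrite (eq_bigl (fun y => y \in A :\ v)); last by move=> y; rewrite !inE andbC.
  rewrite hA -/d; lia.
have h7 : h <= 7 by lia.
have [q vq] := comp_sound (check_all d5 dh h7) Gs Gi cnd.
case/and4P: vq => uq aq sq cq.
have qh i : i \in q -> i < h by move=> iq; move/allP: aq => /(_ i iq).
apply: (@cfg_path v (map (nth v s) q)).
- apply/mapP => -[i iq vi].
  by have := sA i (qh i iq); rewrite -vi !inE eqxx.
- rewrite map_inj_in_uniq // => i j iq jq E.
  by apply/eqP; rewrite -(nth_uniq v _ _ us) ?sz ?E ?qh.
- by rewrite sorted_map.
- rewrite count_map (eq_in_count (a2 := fun i => i < d)) // => i iq.
  by rewrite /preim /= F5 // qh.
Qed.

Definition bnd m := if m <= 8 then 2 * m else 4 * m - 16.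

Lemma main_bound : ~ cfg -> forall A : {set T}, #|EA A| <= bnd #|A|.
Proof.
move=> nc A; have [n] := ubnP #|A|; elim: n A => // n IH A ltA.
case: (boolP [exists x in A, deg A x <= (if #|A| <= 8 then 2 else 4)]).
  case/exists_inP => x xA dx.
  have cm : #|A :\ x| = #|A|.-1 by rewrite (cardsD1 x A) xA.
  have A1 : 0 < #|A| by apply/card_gt0P; exists x.
  have lt' : #|A :\ x| < n by rewrite cm; lia.
  rewrite (EA_del xA); move: (IH _ lt') dx; rewrite cm /bnd.
  case: (leqP #|A| 8) => hA; case: (leqP #|A|.-1 8) => hA'; lia.
move/exists_inP => nex.
have degA : forall x, x \in A -> (if #|A| <= 8 then 2 else 4) < deg A x.
  move=> x xA; rewrite ltnNge; apply/negP => H; apply: nex; by exists x.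
case: (leqP #|A| 8) => hA8 in degA *.
  rewrite /bnd hA8.
  case: (leqP #|EA A| (2 * #|A|)) => // big.
  have hs := handshake A.
  case: (set_0Vmem A) => [A0|[x0 x0A]].
    by move: big; rewrite A0 EA0.
  case: (arg_maxnP (deg A) x0A) => v vA vmax.
  have d5 : 5 <= deg A v.
    rewrite leqNgt; apply/negP => H.
    have : \sum_(y in A) deg A y <= \sum_(y in A) 4.
      by apply: leq_sum => y yA; have := vmax y yA; lia.
    rewrite sum_nat_const hs; lia.
  exfalso; apply: nc; apply: (small vA hA8) => //.
    by move=> x xA; apply/andP; split; [exact: degA | exact: vmax].
  rewrite hs; lia.
exfalso; apply: nc.
case: (set_0Vmem A) => [A0|[x0 x0A]]; first by move: hA8; rewrite A0 cards0.
apply: (@longpath A _ [:: x0]) => //=; last by rewrite x0A.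
Qed.
End Graph.

Theorem lemma2p6 (T : finType) (e : rel T) :
  simple_graph e -> 10 <= #|T| ->
  ~ has_trebly_chorded_cycle_at_vertex e ->
  #|edge_set e| <= 4 * #|T| - 16.
Proof.
move=> [esym eirr] n10 nc.
rewrite -EA_T.
have := main_bound esym eirr nc [set: T].
rewrite cardsT /bnd.
have -> : (#|T| <= 8) = false by apply/negbTE; rewrite -ltnNge; lia.
done.
Qed.
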